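(* Under the setting of the cluster-growth decomposition (with $v_m$ following the canonical grain extension relative to $\mathbf a$, and $F=F_*\sqcup F_\circ\subset E_d(\square_m)$): (1) if $F_\circ\neq\emptyset$, then $(D_Fv_m)(x)=0$ for all $x\in\mathscr C_{bc}^{\mathbf a^F}(\square_m)$; (2) for $x\in\square_m\setminus\mathscr C_{bc}^{\mathbf a^F}(\square_m)$, if $F_\circ$ is not contained in the set of edges having both endpoints in $\mathcal O^{\mathbf a^{F_\circ}}(x)$, then $(D_Fv_m)(x)=0$.
   Context: Bond configurations on $\mathbb Z^d$, $\ell^\infty$ distance $\mathrm{dist}$, $\square_m=\mathbb Z^d\cap(-3^m/2,3^m/2)^d$, $E_d(\square_m)$ its edges, $\partial\square_m=\{x\in\square_m:\exists y\sim x,y\notin\square_m\}$. For a configuration $\mathbf b$: $\mathscr C_{bc}^{\mathbf b}(\square_m)$ is the set of $x\in\square_m$ joined to $\partial\square_m$ by a $\mathbf b$-open path inside $\square_m$; $\mathcal O^{\mathbf b}(x)$ the set of vertices joined to $x$ by a $\mathbf b$-open path inside $\square_m$. $\mathbf a^G(e)=\mathbf 1_{e\in G}+\mathbf a(e)\mathbf 1_{e\notin G}$. Canonical grain relative to $\mathbf a$: $[x]^G=x$ if $x\in\mathscr C_{bc}^{\mathbf a^G}(\square_m)$, else $[x]^G=\arg\min_{y\in\mathscr C_{bc}^{\mathbf a}(\square_m)}\mathrm{dist}(y,\mathcal O^{\mathbf a^G}(x))$ (lexicographic tie-break). Fix $\xi$; $h^{\mathbf b}$ is the unique function on $\mathscr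 C_{bc}^{\mathbf b}(\square_m)$ equal to $\xi\cdot x$ on $\partial\square_m$ and $\mathbf b$-harmonic at its other points; $v_m^G(x):=h^{\mathbf a^G}([x]^G)$ and $(D_Fv_m)(x)=\sum_{G\subset F}(-1)^{|F\setminus G|}v_m^G(x)$. $F_*=\{e\in F:$ both endpoints of $e$ in $\mathscr C_{bc}^{\mathbf a^F}(\square_m)\}$, $F_\circ=F\setminus F_*$. *)

(* Defs.v *)
From HB Require Import structures.
From mathcomp Require Import all_boot all_order all_algebra.
From mathcomp Require Import boolp reals.
From Stdlib Require Import ClassicalEpsilon.
Set Implicit Arguments. Unset Strict Implicit. Unset Printing Implicit Defensive.
Import Order.TTheory GRing.Theory Num.Theory.
Local Open Scope ring_scope.

Section Grain.
Variables (d m : nat).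

Definition side : nat := (3 ^ m)%N.

(* vertices of square_m, indexed by coordinates in {0,..,3^m-1};
   the actual point of Z^d is [emb x] (shift by (3^m-1)/2) *)
Definition V := {ffun 'I_d -> 'I_side}.

Definition emb (x : V) : 'I_d -> int :=
  fun i => (x i : nat)%:Z - ((side.-1)./2)%:Z.

Definition adjZ (z w : 'I_d -> int) : bool := (\sum_(i < d) `|z i - w i|) == 1.

Definition inboxZ (z : 'I_d -> int) : bool :=
  [forall i, (- (side%:Z) < 2 * z i) && (2 * z i < side%:Z)].

Definition bdry : {set V} :=
  [set x | `[< exists z : 'I_d -> int, adjZ (emb x) z && ~~ inboxZ z >]].

Definition adj (x y : V) : bool := adjZ (emb x) (emb y).

Definition Ed : {set {set V}} :=
  [set e : {set V} | [exists x : V, exists y : V, adj x y && (e == [set x; y])]].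

(* bond configurations (only values on edges of the box matter) *)
Definition config := {set V} -> bool.

Definition aG (a : config) (G : {set {set V}}) : config :=
  fun e => (e \in G) || a e.

Definition ropen (b : config) : rel V := fun x y => adj x y && b [set x; y].

Definition Oc (b : config) (x : V) : {set V} := [set y | connect (ropen b) x y].

Definition Cbc (b : config) : {set V} :=
  [set x | [exists y, (y \in bdry) && connect (ropen b) x y]].

Definition distinf (x y : V) : nat := \max_(i < d) absz (emb x i - emb y i).

(* distance from a point to a (nonempty) set; the default [side] exceeds every
   distance in the box and only matters for the empty set *)
Definition distset (y : V) (S : {set V}) : nat := \big[minn/side]_(z in S) distinf y z.

Definition lexlt (y z : V) : Prop :=
  exists i : 'I_d, (forall j : 'I_d, (j < i)%N -> emb y j = emb z j) /\ emb y i < emb z i.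

Definition is_grain (a : config) (G : {set {set V}}) (x y : V) : Prop :=
  if x \in Cbc (aG a G) then y = x else
  [/\ y \in Cbc a,
      forall y', y' \in Cbc a ->
        (distset y (Oc (aG a G) x) <= distset y' (Oc (aG a G) x))%N
    & forall y', y' \in Cbc a ->
        distset y' (Oc (aG a G) x) = distset y (Oc (aG a G) x) -> y' <> y -> lexlt y y'].

Definition grain (a : config) (G : {set {set V}}) (x : V) : V :=
  epsilon (inhabits x) (is_grain a G x).

Variable R : realType.
Variable xi : 'I_d -> R.

Definition dotxi (x : V) : R := \sum_(i < d) xi i * (emb x i)%:~R.

Definition is_harm (b : config) (h : V -> R) : Prop :=
  (forall x, x \in bdry -> h x = dotxi x) /\
  (forall x, x \in Cbc b -> x \notin bdry -> \sum_(y | ropen b x y) (h y - h x) = 0).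

Definition harm (b : config) : V -> R :=
  epsilon (inhabits (fun _ => 0)) (is_harm b).

Definition vm (a : config) (G : {set {set V}}) (x : V) : R :=
  harm (aG a G) (grain a G x).

Definition DF (a : config) (F : {set {set V}}) (x : V) : R :=
  \sum_(G in powerset F) (-1) ^+ #|F :\: G| * vm a G x.

Definition Fstar (a : config) (F : {set {set V}}) : {set {set V}} :=
  [set e in F | e \subset Cbc (aG a F)].

Definition Fcirc (a : config) (F : {set {set V}}) : {set {set V}} :=
  F :\: Fstar a F.

End Grain.

(* Main.v *)
Require Import Defs.
From HB Require Import structures.
From mathcomp Require Import all_boot all_order all_algebra.
From mathcomp Require Import boolp reals.
From mathcomp Require Import lra.
Import Order.TTheory GRing.Theory Num.Theory.
Local Open Scope ring_scope.

Lemma conn_transfer (T : finType) (r r' : rel T) x y :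
  (forall z w, connect r' x z -> r' z w -> r z w) -> connect r' x y -> connect r x y.
Proof.
move=> H /connectP [p pth ->].
elim: p x pth H => [|z p IH] x /=; first by rewrite connect0.
case/andP=> rxz pth H.
apply: (connect_trans (connect1 (H x z (connect0 _ _) rxz))).
apply: IH => // u w cu ru; apply: H ru.
exact: connect_trans (connect1 rxz) cu.
Qed.

Section Core.
Variables (d m : nat).
Implicit Types (b : config d m).

Lemma ropenE b z w : ropen b z w = adj z w && b [set z; w].
Proof. by []. Qed.

Lemma adj_sym : symmetric (@adj d m).
Proof.
move=> x y; rewrite /adj /adjZ; congr (_ == _); apply: eq_bigr => i _.
exact: distrC.
Qed.

Lemma ropen_sym b : symmetric (ropen b).
Proof. by move=> x y; rewrite !ropenE adj_sym setUC. Qed.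

Lemma connect_symb b x y : connect (ropen b) x y = connect (ropen b) y x.
Proof. exact: (sym_connect_sym (ropen_sym b)). Qed.

Lemma Cbc_closed b x y : x \in Cbc b -> connect (ropen b) x y -> y \in Cbc b.
Proof.
rewrite !inE => /existsP [z /andP [hz cz]] cxy; apply/existsP; exists z.
rewrite hz /=; rewrite connect_symb in cxy; exact: connect_trans cxy cz.
Qed.

Lemma Cbc_back b x y : connect (ropen b) x y -> y \in Cbc b -> x \in Cbc b.
Proof.
move=> cxy; rewrite !inE => /existsP [z /andP [hz cz]]; apply/existsP; exists z.
by rewrite hz /=; exact: connect_trans cxy cz.
Qed.

Definition le_conf b b' := forall s, b s -> b' s.

Lemma conn_mono {b b'} : le_conf b b' -> forall {x y},
  connect (ropen b) x y -> connect (ropen b') x y.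
Proof.
move=> H x y; apply: conn_transfer => z w _ /andP [a1 a2].
by rewrite ropenE a1 H.
Qed.

Lemma Cbc_mono {b b'} : le_conf b b' -> Cbc b \subset Cbc b'.
Proof.
move=> H; apply/subsetP => x; rewrite !inE => /existsP [y /andP [hy c]].
apply/existsP; exists y; rewrite hy /=; exact: conn_mono c.
Qed.

Lemma Oc_mono {b b'} x : le_conf b b' -> Oc b x \subset Oc b' x.
Proof.
move=> H; apply/subsetP => y; rewrite !inE; exact: conn_mono.
Qed.

Section Step.
Variables (b b' bF : config d m) (e : {set V d m}).
Hypotheses (l1 : le_conf b b') (l2 : le_conf b' bF)
  (hdiff : forall s, b' s -> ~~ b s -> s = e) (he : ~~ (e \subset Cbc bF)).

Lemma step z w : ropen b' z w -> ~~ ropen b z w -> [set z; w] = e /\ ropen bF z w.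
Proof.
move=> /andP [az bz]; rewrite ropenE az /= => nb; split; first exact: hdiff.
by rewrite ropenE az l2.
Qed.

Lemma pair_sub z w : [set z; w] = e -> z \in Cbc bF -> w \in Cbc bF -> False.
Proof.
move=> E zC wC; move: he; rewrite -E => /negP; apply; apply/subsetP => u.
by rewrite in_set2 => /orP [] /eqP ->.
Qed.

Lemma step_out z w : z \in Cbc bF -> ropen b' z w -> ropen b z w.
Proof.
move=> zC r'; apply/negPn/negP => nr; have [E rF] := @step _ _ r' nr.
apply: (@pair_sub _ _ E zC); exact: Cbc_closed zC (connect1 rF).
Qed.

Lemma Cbc_eq : Cbc b' = Cbc b.
Proof.
apply/eqP; rewrite eqEsubset (Cbc_mono l1) andbT; apply/subsetP => x hx.
have hxF : x \in Cbc bF by apply: (subsetP (Cbc_mono l2)).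
move: hx; rewrite !inE => /existsP [y /andP [hy cxy]]; apply/existsP; exists y.
rewrite hy /=; apply: conn_transfer cxy => z w cz rzw; apply: step_out rzw.
exact: Cbc_closed hxF (conn_mono l2 cz).
Qed.

Lemma ropen_eq z w : z \in Cbc b -> ropen b' z w = ropen b z w.
Proof.
move=> zC; apply/idP/idP; last first.
  by move=> /andP [a1 a2]; rewrite ropenE a1 l1.
apply: step_out; apply: (subsetP (Cbc_mono l2)); rewrite Cbc_eq //.
Qed.

Lemma harm_eq (R : realType) (xi : 'I_d -> R) : harm xi b' = harm xi b.
Proof.
rewrite /harm; have -> : is_harm xi b' = is_harm xi b; last done.
apply: funext => h; apply: propext; rewrite /is_harm Cbc_eq.
split => [][h1 h2]; split => // x xC xB; rewrite -[RHS](h2 x xC xB); apply: eq_bigl => y /=; rewrite ropen_eq //; exact: (subsetP (Cbc_mono l1)).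

Qed.

Lemma Oc_eq x : ~~ (e \subset Oc bF x) -> Oc b' x = Oc b x.
Proof.
move=> H; apply/eqP; rewrite eqEsubset (Oc_mono x l1) andbT.
apply/subsetP => y; rewrite !inE => cy; apply: conn_transfer cy => z w cz r'.
apply/negPn/negP => nr; have [E rF] := @step _ _ r' nr.
move: H; rewrite -E => /negP; apply; apply/subsetP => u; rewrite !inE.
case/orP => /eqP ->; first by have := conn_mono l2 cz.
by have := connect_trans (conn_mono l2 cz) (connect1 rF).
Qed.

End Step.

Variables (R : realType) (xi : 'I_d -> R).

Lemma vm_eq (a : config d m) (F H : {set {set V d m}}) (e : {set V d m}) (x : V d m) : ~~ (e \subset Cbc (aG a F)) -> H \subset F ->
  ~~ (e \subset Oc (aG a F) x) -> vm xi a H x = vm xi a (H :\ e) x.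
Proof.
move=> he HF hO.
have l1 : le_conf (aG a (H :\ e)) (aG a H).
  move=> s; rewrite /aG !inE => /orP [/andP [_ ->]|->] //; by rewrite orbT.
have l2 : le_conf (aG a H) (aG a F).
  move=> s; rewrite /aG => /orP [/(subsetP HF) ->|->] //; by rewrite orbT.
have hd : forall s, aG a H s -> ~~ aG a (H :\ e) s -> s = e.
  move=> s; rewrite /aG !inE negb_or => /orP [sH|->]; last by rewrite andbF.
  by rewrite sH andbT => /andP [/negPn /eqP].
rewrite /vm (harm_eq _ _ _ _ l1 l2 hd he) /grain.
have -> : is_grain a H x = is_grain a (H :\ e) x; last done.
apply: funext => y; rewrite /is_grain (Cbc_eq _ _ _ _ l1 l2 hd he) (Oc_eq _ _ _ _ l1 l2 hd x hO).
done.
Qed.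

Lemma DF0 (a : config d m) (F : {set {set V d m}}) (e : {set V d m}) (x : V d m) : e \in F ->
  (forall H : {set {set V d m}}, H \subset F -> vm xi a H x = vm xi a (H :\ e) x) -> DF xi a F x = 0.
Proof.
move=> eF hv.
pose phi (G : {set {set V d m}}) := if e \in G then G :\ e else e |: G.
have phiK : involutive phi.
  move=> G; rewrite /phi; case eG: (e \in G) => /=.
    by rewrite setD11 setD1K.
  by rewrite setU11 setU1K ?eG.
have phiP : forall G, (phi G \in powerset F) = (G \in powerset F).
  move=> G; rewrite !powersetE /phi; case: ifP => eG.
    apply/idP/idP => h; last exact: subset_trans (subD1set _ _) h.
    by rewrite -(setD1K eG) subUset sub1set eF.
  by rewrite subUset sub1set eF.
have sgn : forall G : {set {set V d m}}, G \subset F ->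
    (-1) ^+ #|F :\: phi G| = - (-1) ^+ #|F :\: G| :> R.
  move=> G GF; rewrite /phi; case: ifP => eG.
    rewrite (cardsD1 e (F :\: (G :\ e))) !inE eqxx eF /=.
    have -> : F :\: (G :\ e) :\ e = F :\: G.
      apply/setP => u; rewrite !inE; case: (eqVneq u e) => [->|] //=.
      by rewrite eG.
    by rewrite add1n exprS mulN1r.
  rewrite (cardsD1 e (F :\: G)) !inE eG eF /= add1n exprS mulN1r opprK.
  suff -> : F :\: G :\ e = F :\: (e |: G) by [].
  apply/setP => u; rewrite !inE.
  by case: (eqVneq u e).
have vphi : forall G : {set {set V d m}}, G \subset F -> vm xi a (phi G) x = vm xi a G x.
  move=> G GF; rewrite /phi; case: ifP => eG; first by rewrite -hv.
  rewrite hv ?setU1K ?eG //; by rewrite subUset sub1set eF.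
set S := DF xi a F x.
have : S = - S.
  rewrite {1}/S /DF (reindex_inj (can_inj phiK)) /= -sumrN.
  apply: eq_big => [G|G]; first exact: phiP.
  rewrite phiP powersetE => GF; rewrite (vphi G GF) (sgn G GF) mulNr.
  done.
move=> h; lra.
Qed.

End Core.

Theorem corollary6p3 (d m : nat) (R : realType) (xi : 'I_d -> R)
  (a : config d m) (F : {set {set V d m}}) :
  F \subset Ed d m ->
  (Fcirc a F != set0 ->
     forall x, x \in Cbc (aG a F) -> DF xi a F x = 0) /\
  (forall x, x \notin Cbc (aG a F) ->
     ~~ (Fcirc a F \subset [set e in Ed d m | e \subset Oc (aG a (Fcirc a F)) x]) ->
     DF xi a F x = 0).
Proof.
move=> FEd.
have circP : forall e, e \in Fcirc a F -> e \in F /\ ~~ (e \subset Cbc (aG a F)).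
  move=> e; rewrite /Fcirc /Fstar !inE => /andP [h eF]; split => //.
  by move: h; rewrite eF.
split.
  move=> /set0Pn [e /circP [eF he]] x xC; apply: (@DF0 d m R xi a F e) => // H HF.
  apply: (@vm_eq d m R xi a F H e x) => //; apply/negP => hs; move/negP: he; apply.
  apply: subset_trans hs _; apply/subsetP => y; rewrite inE.
  exact: Cbc_closed xC.
move=> x xn /subsetPn [e eC eS]; have [eF he] := circP e eC.
apply: (@DF0 d m R xi a F e) => // H HF; apply: (@vm_eq d m R xi a F H e x) => //.
apply/negP => hs; move: eS; rewrite inE (subsetP FEd e eF) /=; apply/negPn.
rewrite negbK; apply: subset_trans hs _; apply/subsetP => y; rewrite !inE.
apply: conn_transfer => z w cz /andP [az bz]; rewrite ropenE az /=.
move: bz; rewrite /aG => /orP [sF|->]; last by rewrite orbT.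
rewrite /Fcirc /Fstar !inE sF /= andbT; apply/orP; left; apply/negP => sub.
move/negP: xn; apply; apply: Cbc_back cz _.
move/subsetP: sub; apply; by rewrite in_set2 eqxx.
Qed.
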